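(* Let $Q$ be a QNP. Any strong cyclic policy $\pi$ for the FOND problem $P=T(Q)$ is $P$-terminating.
   Context: A QNP $Q=\langle F,V,I,O,G\rangle$ has propositional variables $F$, numerical variables $V$, initial and goal sets $I,G$ of literals $p,\neg p$, $X=0$, $X>0$, and actions $a\in O$ with precondition $Pre(a)$, propositional effects $\mathit{Eff}(a)$, numerical effects $N(a)\subseteq\{Inc(X),Dec(X):X\in V\}$ (at most one per variable; $Dec(X)\in N(a)$ implies $X>0\in Pre(a)$). The FOND problem $T(Q)$: let $n=|F|+|V|$ and $Max=1+2^n$. Propositional variables: $F$, atoms $p_{X=0}$ ($X\in V$; $X=0$, $X>0$ denote $p_{X=0}$, $\neg p_{X=0}$), $in(X)$, $depth(d)$ ($0\le d\le|V|$), $index(X,d)$ ($1\le d\le|V|$), and counters $c(d)$ ($0\le d\le|V|$), $c_T$ over $\{0,\dots,Max\}$ encoded in binary. Initial state: $I$ plus $depth(0)$, all counters $0$, other new atoms false. Goal $G$. Actions: $Push(X,d)$ ($0\le d\le|V|-1$): pre $\neg in(X),depth(d),c(d)<Max$; eff $in(X),index(X,d+1),depth(d+1),\neg depth(d),c(d):=c(d)+1,c(d+1):=0$. $Pop(X,d)$ ($1\le d\le|V|$): pre $in(X),index(X,d),depth(d)$; eff $\neg in(X),\neg index(X,d),\neg depth(d),depth(d-1)$. $Move$: pre $depth(0),c_T<Max$; eff $c_T:=c_T+1$. For $a\in O$ with no $Dec$ effect: action $a$ with pre $Pre(a)$ plus $\neg in(Y)$ for each $Inc(Y)\in N(a)$,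 eff $\mathit{Eff}(a)$ plus $Y>0$ for each $Inc(Y)\in N(a)$. For $a\in O$ with a $Dec$ effect, $X$ with $Dec(X)\in N(a)$, $1\le d\le|V|$: action $a(X,d)$ with pre $Pre(a)$, $\neg in(Y)$ for each $Inc(Y)\in N(a)$, $index(X,d)$; eff $\mathit{Eff}(a)$, $Y>0$ for each $Inc(Y)\in N(a)$, nondeterministic $Z>0\mid Z=0$ for each $Dec(Z)\in N(a)$, and $c(d'):=0$ for all $d\le d'\le|V|$. An action of $T(Q)$ is a $Dec(X)$ (resp. $Inc(X)$) action if it comes from an action $a\in O$ with $Dec(X)\in N(a)$ (resp. $Inc(X)\in N(a)$). A policy is a partial map from states to actions; a $\pi$-trajectory is a sequence from the initial state with $\pi(t_i)$ applicable in $t_i$ and $t_{i+1}$ a possible successor. $\pi$ is strong cyclic iff for every $\pi$-trajectory from the initial state to $t$ there is a $\pi$-trajectory from $t$ to a goal state. An infinite $\pi$-trajectory is terminating if some $X\in V$ has $\pi(t)$ a $Dec(X)$ action for some state $t$ occurring infinitely often and $\pi(t')$ not an $Inc(X)$ action for any state $t'$ occurring infinitely often; $\pi$ is $P$-terminating iff all its infinite $\pi$-trajectories are terminating. *)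

(* Defs.v *)
From HB Require Import structures.
From mathcomp Require Import all_boot.

Set Implicit Arguments.
Unset Strict Implicit.
Unset Printing Implicit Defensive.

Section QNP.
Variables (F V O : finType).

Inductive neff := Inc | Dec.

Definition isDecN (o : option neff) : bool := if o is Some Dec then true else false.
Definition isIncN (o : option neff) : bool := if o is Some Inc then true else false.

(** Literals: [inl (p, true)] = p, [inl (p, false)] = ¬p,
    [inr (X, true)] = X>0, [inr (X, false)] = X=0. *)
Definition lit := ((F * bool) + (V * bool))%type.

(** A QNP <F,V,I,O,G>: F, V, O are the finite types of propositional variables,
    numerical variables and actions.  [qN a X] is the (at most one) numerical
    effect of [a] on [X]. *)
Record qnp := QNP {
  qI   : {set lit};
  qG   : {set lit};
  qPre : O -> {set lit};
  qEff : O -> {set (F * bool)};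
  qN   : O -> V -> option neff }.

Definition qnp_wf (Q : qnp) : Prop :=
  forall a X, qN Q a X = Some Dec -> inr (X, true) \in qPre Q a.

Definition nV : nat := #|V|.
Definition Max : nat := 1 + 2 ^ (#|F| + #|V|).

(** States of T(Q): valuations of its atoms.
    sF: atoms of F; sZ X: atom p_{X=0}; sIn X: in(X);
    sDepth d: depth(d), 0<=d<=|V|;
    sIndex (X,d): index(X,d+1), i.e. index(X,d') for 1<=d'<=|V|;
    sC d: value of counter c(d), 0<=d<=|V|; sCT: value of c_T.
    Counters (binary-encoded in the paper) are represented by their value. *)
Record tstate := TState {
  sF : {ffun F -> bool};
  sZ : {ffun V -> bool};
  sIn : {ffun V -> bool};
  sDepth : {ffun 'I_nV.+1 -> bool};
  sIndex : {ffun (V * 'I_nV) -> bool};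
  sC : {ffun 'I_nV.+1 -> 'I_Max.+1};
  sCT : 'I_Max.+1 }.

(** Raw action names of T(Q):
    RPush X d   = Push(X,d),        0 <= d <= |V|-1
    RPop X d    = Pop(X,d+1),       1 <= d+1 <= |V|
    RMove       = Move
    RAct a      = a,                a ∈ O without Dec effect
    RDec a X d  = a(X,d+1),         Dec(X) ∈ N(a), 1 <= d+1 <= |V| *)
Inductive raction :=
  | RPush of V & 'I_nV
  | RPop of V & 'I_nV
  | RMove
  | RAct of O
  | RDec of O & V & 'I_nV.

Definition hasDec (Q : qnp) (a : O) : bool := [exists X, isDecN (qN Q a X)].

Definition valid (Q : qnp) (b : raction) : bool :=
  match b with
  | RAct a => ~~ hasDec Q a
  | RDec a X _ => isDecN (qN Q a X)
  | _ => true
  end.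

Definition taction (Q : qnp) := {b : raction | valid Q b}.

Definition lit_holds (t : tstate) (l : lit) : bool :=
  match l with
  | inl (p, b) => sF t p == b
  | inr (X, b) => sZ t X == ~~ b
  end.

Definition sat (t : tstate) (L : {set lit}) : Prop :=
  forall l, l \in L -> lit_holds t l.

Definition upd (T : finType) (R : Type) (f : {ffun T -> R}) (x : T) (v : R) :
  {ffun T -> R} := [ffun y => if y == x then v else f y].

Definition noInc (Q : qnp) (a : O) (t : tstate) : Prop :=
  forall Y, qN Q a Y = Some Inc -> sIn t Y = false.

Definition tpre (Q : qnp) (t : tstate) (b : raction) : Prop :=
  match b with
  | RPush X d => sIn t X = false /\ sDepth t (inord d) /\ sC t (inord d) < Max
  | RPop X d => sIn t X /\ sIndex t (X, d) /\ sDepth t (inord d.+1)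
  | RMove => sDepth t (inord 0) /\ sCT t < Max
  | RAct a => sat t (qPre Q a) /\ noInc Q a t
  | RDec a X d => [/\ sat t (qPre Q a), noInc Q a t & sIndex t (X, d)]
  end.

Definition qeff_rel (Q : qnp) (a : O) (t t' : tstate) : Prop :=
  [/\ (forall p b, (p, b) \in qEff Q a -> sF t' p = b),
      (forall p, (p, true) \notin qEff Q a -> (p, false) \notin qEff Q a ->
                 sF t' p = sF t p) &
      (forall Y, match qN Q a Y with
                 | Some Inc => sZ t' Y = false
                 | Some Dec => True
                 | None => sZ t' Y = sZ t Y
                 end)].

Definition teff (Q : qnp) (t : tstate) (b : raction) (t' : tstate) : Prop :=
  match b with
  | RPush X d =>
      t' = TState (sF t) (sZ t) (upd (sIn t) X true)
             (upd (upd (sDepth t) (inord d) false) (inord d.+1) true)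
             (upd (sIndex t) (X, d) true)
             (upd (upd (sC t) (inord d) (inord (sC t (inord d)).+1))
                  (inord d.+1) ord0)
             (sCT t)
  | RPop X d =>
      t' = TState (sF t) (sZ t) (upd (sIn t) X false)
             (upd (upd (sDepth t) (inord d.+1) false) (inord d) true)
             (upd (sIndex t) (X, d) false)
             (sC t) (sCT t)
  | RMove =>
      t' = TState (sF t) (sZ t) (sIn t) (sDepth t) (sIndex t) (sC t)
             (inord (sCT t).+1)
  | RAct a =>
      [/\ qeff_rel Q a t t', sIn t' = sIn t, sDepth t' = sDepth t,
          sIndex t' = sIndex t & sC t' = sC t /\ sCT t' = sCT t]
  | RDec a X d =>
      [/\ qeff_rel Q a t t', sIn t' = sIn t, sDepth t' = sDepth t,
          sIndex t' = sIndex t &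
          sC t' = [ffun e : 'I_nV.+1 => if (d < e)%N then ord0 else sC t e]
          /\ sCT t' = sCT t]
  end.

Definition succ (Q : qnp) (t : tstate) (b : taction Q) (t' : tstate) : Prop :=
  tpre Q t (sval b) /\ teff Q t (sval b) t'.

Definition init (Q : qnp) (t : tstate) : Prop :=
  [/\ sat t (qI Q), sIn t = [ffun=> false],
      sDepth t = [ffun e => e == ord0], sIndex t = [ffun=> false] &
      sC t = [ffun=> ord0] /\ sCT t = ord0].

Definition goal (Q : qnp) (t : tstate) : Prop := sat t (qG Q).

Definition policy (Q : qnp) := tstate -> option (taction Q).

Definition step (Q : qnp) (pi : policy Q) (t t' : tstate) : Prop :=
  ~ goal Q t /\ exists b, pi t = Some b /\ succ t b t'.

Definition ftraj (Q : qnp) (pi : policy Q) (tau : nat -> tstate) (n : nat) :=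
  forall i, i < n -> step pi (tau i) (tau i.+1).

Definition strong_cyclic (Q : qnp) (pi : policy Q) : Prop :=
  forall (tau : nat -> tstate) (n : nat),
    init Q (tau 0) -> ftraj pi tau n ->
    exists (sigma : nat -> tstate) (m : nat),
      [/\ sigma 0 = tau n, ftraj pi sigma m & goal Q (sigma m)].

Definition itraj (Q : qnp) (pi : policy Q) (tau : nat -> tstate) : Prop :=
  init Q (tau 0) /\ forall i, step pi (tau i) (tau i.+1).

Definition inf_often (tau : nat -> tstate) (t : tstate) : Prop :=
  forall n, exists m, n <= m /\ tau m = t.

Definition decX (Q : qnp) (X : V) (b : taction Q) : bool :=
  match sval b with
  | RAct a => isDecN (qN Q a X)
  | RDec a _ _ => isDecN (qN Q a X)
  | _ => false
  end.

Definition incX (Q : qnp) (X : V) (b : taction Q) : bool :=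
  match sval b with
  | RAct a => isIncN (qN Q a X)
  | RDec a _ _ => isIncN (qN Q a X)
  | _ => false
  end.

Definition terminating (Q : qnp) (pi : policy Q) (tau : nat -> tstate) : Prop :=
  exists X : V,
    (exists t b, [/\ inf_often tau t, pi t = Some b & decX X b]) /\
    (forall t b, inf_often tau t -> pi t = Some b -> ~~ incX X b).

Definition P_terminating (Q : qnp) (pi : policy Q) : Prop :=
  forall tau, itraj pi tau -> terminating pi tau.

End QNP.

(* Main.v *)
Require Import Defs.
From mathcomp Require Import all_boot.
From mathcomp Require Import zify.
From Stdlib Require Import Classical.
Set Implicit Arguments.
Unset Strict Implicit.
Unset Printing Implicit Defensive.

Lemma minP (P : nat -> Prop) n : P n -> exists k, P k /\ forall j, P j -> k <= j.
Proof.
elim: n {-2}n (leqnn n) => [|n IH] j hj Pj.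
  exists j; split => // i _; move: hj; rewrite leqn0 => /eqP->; done.
case: (classic (exists i, i < j /\ P i)) => [[i [hi Pi]]|H].
  apply: (IH i) => //; lia.
exists j; split=> // i Pi; rewrite leqNgt; apply/negP => hij; apply: H; by exists i.
Qed.

Lemma recur_gen (T : finType) (S : Type) (code : S -> T) (tau : nat -> S) :
  injective code -> exists N, forall m, N <= m -> forall n, exists m', n <= m' /\ tau m' = tau m.
Proof.
move=> inj.
suff: forall L : seq T, exists N, forall m, N <= m -> code (tau m) \in L ->
   forall n, exists m', n <= m' /\ tau m' = tau m.
  case/(_ (enum T)) => N HN; exists N => m hm; apply: HN => //; by rewrite mem_enum.
elim=> [|c L [N HN]]; first by exists 0.
case: (classic (forall n, exists m', n <= m' /\ code (tau m') = c)) => Hc.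
  exists N => m hm; rewrite inE => /orP [/eqP hc|hL]; last exact: HN.
  move=> n; case: (Hc n) => m' [hn hm']; exists m'; split=> //; apply: inj; by rewrite hm' hc.
move/not_all_ex_not: Hc => [n0 Hn0]; exists (maxn N n0) => m hm; rewrite inE => /orP [/eqP hc|hL].
  exfalso; apply: Hn0; exists m; split=> //; lia.
apply: HN => //; lia.
Qed.

Lemma mono (f : nat -> nat) N : (forall m, N <= m -> f m <= f m.+1) ->
  forall m m', N <= m -> m <= m' -> f m <= f m'.
Proof.
move=> H m m' hm; elim: m' => [|m' IH]; first by rewrite leqn0 => /eqP ->.
rewrite leq_eqVlt => /orP [/eqP->//|]; rewrite ltnS => h.
apply: leq_trans (IH h) (H _ _); lia.
Qed.

Section S.
Variables (F V O : finType) (Q : qnp F V O).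
Local Notation state := (tstate F V).
Local Notation N := (nV V).

Definition dep (t : state) : nat := \max_(e : 'I_N.+1 | sDepth t e) (e : nat).

Lemma depE t k : sDepth t = [ffun e => e == k] -> dep t = k.
Proof. move=> H; rewrite /dep (big_pred1 k) // => e; by rewrite H ffunE. Qed.

Definition Inv (t : state) := [/\ exists k : 'I_N.+1, sDepth t = [ffun e => e == k],
 (forall X d, sIndex t (X,d) -> sIn t X),
 (forall X (d : 'I_N), sIndex t (X,d) -> d < dep t),
 (forall X d d', sIndex t (X,d) -> sIndex t (X,d') -> d = d') &
 (forall X Y d, sIndex t (X,d) -> sIndex t (Y,d) -> X = Y)].

Lemma dep_le t : Inv t -> dep t <= N.
Proof. by case=> [[k Hk]] _ _ _ _; rewrite (depE Hk) -ltnS. Qed.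

Lemma dep_at t j : Inv t -> j <= N -> sDepth t (inord j) -> dep t = j.
Proof.
case=> [[k Hk]] _ _ _ _ hj; rewrite (depE Hk) Hk ffunE => /eqP <-.
by rewrite inordK.
Qed.

Lemma inord_eq i j : i <= N -> j <= N -> (inord i == inord j :> 'I_N.+1) = (i == j).
Proof.
move=> hi hj; apply/eqP/eqP => [/(congr1 (@nat_of_ord _))|->] //; rewrite !inordK ?ltnS // => ->.
Qed.

Lemma inv_init t : init Q t -> Inv t.
Proof.
case=> _ hin hd hi _; split.
- by exists ord0.
- by move=> X d; rewrite hi ffunE.
- by move=> X d; rewrite hi ffunE.
- by move=> X d d'; rewrite hi ffunE.
- by move=> X Y d; rewrite hi ffunE.
Qed.

Lemma Inv_ext t t' : sDepth t' = sDepth t -> sIndex t' = sIndex t -> sIn t' = sIn t ->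
  Inv t -> Inv t'.
Proof. by move=> hd hi hn; rewrite /Inv /dep hd hi hn. Qed.

Lemma step_lemma t b t' : Inv t -> tpre Q t b -> teff Q t b t' ->
  [/\ Inv t',
      match b with RPush _ d => dep t = d /\ dep t' = d.+1
                 | RPop _ d => dep t = d.+1 /\ dep t' = d
                 | _ => dep t' = dep t end,
      (forall X (d : 'I_N), d < dep t -> d < dep t' -> sIndex t' (X,d) = sIndex t (X,d)) &
      sCT t <= sCT t' /\ (b = @RMove V O -> sCT t < sCT t')].
Proof.
move=> hI; have hle := dep_le hI; case: hI => [[k Hk] I2 I3 I4 I5].
case: b => [X d|X d||a|a X d] /=.
- case=> hin [hd hc] ht'.
  have ed : dep t = d by apply: (dep_at (And5 (ex_intro _ k Hk) I2 I3 I4 I5)) => //; apply: ltnW.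
  have Ed : sDepth t' = [ffun e => e == inord d.+1].
    rewrite ht' /=; apply/ffunP => e; rewrite !ffunE Hk ffunE.
    move: hd; rewrite Hk ffunE => /eqP <-.
    by case: eqP => //= _; case: eqP.
  have ed' : dep t' = d.+1 by rewrite (depE Ed) inordK // ltnS.
  have Ei : sIndex t' = upd (sIndex t) (X,d) true by rewrite ht'.
  have En : sIn t' = upd (sIn t) X true by rewrite ht'.
  have Ect : sCT t' = sCT t by rewrite ht'.
  rewrite ed' ed Ect; split => //.
  + split.
    * by exists (inord d.+1).
    * move=> Y e; rewrite Ei En !ffunE; case: eqP => [[-> _]|_]; first by rewrite eqxx.
      by case: eqP => // _; apply: I2.
    * move=> Y e; rewrite ed' Ei !ffunE; case: eqP => [[_ ->]//|_] /I3; rewrite ed; lia.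
    * move=> Y e e'; rewrite Ei !ffunE.
      have nX : forall e0, sIndex t (X,e0) = false by move=> e0; apply/negP => /I2; rewrite hin.
      case: (Y =P X) => [->|nY].
        rewrite !xpair_eqE !eqxx /= !nX.
        by case: eqP => // ->; case: eqP.
      have nYX : forall e0, ((Y,e0) == (X,d)) = false by move=> e0; rewrite xpair_eqE; case: eqP.
      rewrite !nYX; exact: I4.
    * move=> Y Z e; rewrite Ei !ffunE.
      have nd : forall Y0, sIndex t (Y0,d) = false by move=> Y0; apply/negP => /I3; rewrite ed ltnn.
      case: (e =P d) => [->|ne].
        rewrite !xpair_eqE !eqxx !andbT !nd.
        by case: eqP => // ->; case: eqP.
      have nn : forall Y0, ((Y0,e) == (X,d)) = false by move=> Y0; rewrite xpair_eqE andbC; case: eqP.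
      rewrite !nn; exact: I5.
  + move=> Y e he _; rewrite Ei ffunE; case: eqP => // -[_ ee].
    by move: he; rewrite ee ltnn.
- case=> hin [hix hd] ht'.
  have ed : dep t = d.+1 by apply: (dep_at (And5 (ex_intro _ k Hk) I2 I3 I4 I5)) => //.
  have Ed : sDepth t' = [ffun e => e == inord d].
    rewrite ht' /=; apply/ffunP => e; rewrite !ffunE Hk ffunE.
    move: hd; rewrite Hk ffunE => /eqP <-.
    by case: eqP => //= _; case: eqP.
  have ed' : dep t' = d by rewrite (depE Ed) inordK // ltnS ltnW.
  have Ei : sIndex t' = upd (sIndex t) (X,d) false by rewrite ht'.
  have En : sIn t' = upd (sIn t) X false by rewrite ht'.
  have Ect : sCT t' = sCT t by rewrite ht'.
  rewrite ed' ed Ect; split => //.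
  + split.
    * by exists (inord d).
    * move=> Y e; rewrite Ei En !ffunE; case: eqP => // ne.
      case: eqP => [ey|_]; last exact: I2.
      by subst Y => h; case: ne; rewrite (I4 _ _ _ h hix).
    * move=> Y e; rewrite ed' Ei !ffunE; case: eqP => // ne h.
      have := I3 _ _ h; rewrite ed ltnS leq_eqVlt => /orP [/eqP ee|//].
      have ee' : e = d by apply: val_inj.
      by subst e; case: ne; rewrite (I5 _ _ _ h hix).
    * move=> Y e e'; rewrite Ei !ffunE.
      case: eqP => // _; case: eqP => // _; exact: I4.
    * move=> Y Z e; rewrite Ei !ffunE.
      case: eqP => // _; case: eqP => // _; exact: I5.
  + move=> Y e _ he; rewrite Ei ffunE; case: eqP => // -[_ ee].
    by move: he; rewrite ee ltnn.
- case=> hd hct ->; split => //=.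
  + by apply: (Inv_ext (t := t)) => //; split => //; exists k.
  + have hm : (sCT t).+1 < (Max F V).+1 by rewrite ltnS.
    by rewrite inordK //; split => //; apply: leqnSn.
- move=> _ [_ hin hd hi [_ hct]].
  split.
  + by apply: (Inv_ext (t := t)) => //; split => //; exists k.
  + by rewrite /dep hd.
  + by rewrite hi.
  + by rewrite hct.
- move=> _ [_ hin hd hi [_ hct]].
  split.
  + by apply: (Inv_ext (t := t)) => //; split => //; exists k.
  + by rewrite /dep hd.
  + by rewrite hi.
  + by rewrite hct.
Qed.

Lemma c_step t b t' d0 : Inv t -> tpre Q t b -> teff Q t b t' -> d0 <= dep t ->
  (forall a X d, b = @RDec V O a X d -> d0 <= d) ->
  sC t (inord d0) <= sC t' (inord d0) /\
  (forall X d, b = @RPush V O X d -> dep t = d0 -> sC t (inord d0) < sC t' (inord d0)).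
Proof.
move=> hI; have hle := dep_le hI.
case: b => [X d|X d||a|a X d] /=.
- case=> hin [hd hc] ht' hd0 _.
  have ed : dep t = d by apply: (dep_at hI) => //; apply: ltnW.
  have hd0N : d0 <= N by apply: leq_trans hd0 hle.
  rewrite ht' /= !ffunE.
  have -> : (inord d0 == inord d.+1 :> 'I_N.+1) = false.
    rewrite inord_eq; [|exact: hd0N|exact: ltn_ord].
    by apply/negbTE; rewrite neq_ltn ltnS -ed hd0.
  rewrite inord_eq; [|exact: hd0N|exact: ltnW].
  case: eqP => [e|ne].
    subst d0; have hm : (sC t (inord d)).+1 < (Max F V).+1 by rewrite ltnS.
    rewrite inordK; last exact: hm.
    split; [lia | by move=> *; lia].
  split; first exact: leqnn.
  by move=> X' d' _ e; case: ne; rewrite -e ed.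
- case=> _ _ -> _ _; split; [exact: leqnn | by []].
- case=> _ _ -> _ _; split; [exact: leqnn | by []].
- move=> _ [_ _ _ _ [-> _]] _ _; split; [exact: leqnn | by []].
- move=> _ [_ _ _ _ [-> _]] hd0 hdec; have := hdec _ _ _ erefl.
  rewrite ffunE inordK; last by rewrite ltnS (leq_trans hd0 hle).
  move=> h; rewrite ltnNge h /=; split; [exact: leqnn | by []].
Qed.
Lemma ract_det t a t1 t2 : ~~ hasDec Q a -> teff Q t (RAct V a) t1 -> teff Q t (RAct V a) t2 -> t1 = t2.
Proof.
move=> hnd; case: t1 => [f1 z1 n1 d1 i1 c1 ct1]; case: t2 => [f2 z2 n2 d2 i2 c2 ct2] /=.
case=> [[hE1 hU1 hZ1] /= e1 e2 e3 [e4 e5]] [[hE2 hU2 hZ2] /= e1' e2' e3' [e4' e5']].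
rewrite e1 e2 e3 e4 e5 e1' e2' e3' e4' e5'.
have -> : f1 = f2.
  apply/ffunP => p.
  have E1 := hE1 p; have E2 := hE2 p; have U1 := hU1 p; have U2 := hU2 p; simpl in *.
  case H1: ((p,true) \in qEff Q a); first by rewrite (E1 _ H1) (E2 _ H1).
  case H2: ((p,false) \in qEff Q a); first by rewrite (E1 _ H2) (E2 _ H2).
  by rewrite U1 ?H1 ?H2 // U2 ?H1 ?H2.
have -> : z1 = z2.
  apply/ffunP => Y.
  have Z1 := hZ1 Y; have Z2 := hZ2 Y; simpl in *.
  move: Z1 Z2; case E: (qN Q a Y) => [[]|].
  + by move=> -> ->.
  + by move: hnd => /existsPn /(_ Y); rewrite E.
  + by move=> -> ->.
by [].
Qed.
End S.

Theorem theorem11 (F V O : finType) (Q : qnp F V O) (pi : policy Q) :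
  qnp_wf Q -> strong_cyclic pi -> P_terminating pi.
Proof.
move=> _ hsc tau [hinit hstep].
have stepE : forall m, exists b, pi (tau m) = Some b /\
    tpre Q (tau m) (sval b) /\ teff Q (tau m) (sval b) (tau m.+1).
  by move=> m; case: (hstep m) => _ [b [hb [h1 h2]]]; exists b.
have hinv : forall m, Inv (tau m).
  elim=> [|m IH]; first exact: inv_init hinit.
  by case: (stepE m) => b [_ [h1 h2]]; case: (step_lemma IH h1 h2).
pose code (t : tstate F V) := (sF t, sZ t, sIn t, sDepth t, sIndex t, sC t, sCT t).
have code_inj : injective code.
  by case=> ? ? ? ? ? ? ? [] ? ? ? ? ? ? ? [] -> -> -> -> -> -> ->.
have [N0 hrec] := recur_gen tau code_inj.
have mono_ct : forall k, 0 <= k -> sCT (tau k) <= sCT (tau k.+1).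
  move=> k _; case: (stepE k) => c [_ [g1 g2]].
  by case: (step_lemma (hinv k) g1 g2) => _ _ _ [].
have nomove : forall m b, N0 <= m -> pi (tau m) = Some b -> sval b <> RMove V O.
  move=> m b hm hb hmv.
  case: (stepE m) => b' [hb' [h1 h2]].
  have eb : b' = b by congruence.
  subst b'.
  case: (step_lemma (hinv m) h1 h2) => _ _ _ [_ hlt].
  have := hlt hmv.
  have [m' [hm' em']] := hrec m hm m.+1.
  have := mono (f := fun k => nat_of_ord (sCT (tau k))) mono_ct (m := m.+1) (m' := m') (leq0n _) hm'.
  rewrite /= em'; lia.
have [d0 [[m0 [hm0 ed0]] hmin]] :=
  minP (P := fun k => exists m, N0 <= m /\ dep (tau m) = k) (n := dep (tau N0))
       (ex_intro _ N0 (conj (leqnn _) erefl)).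
have hge : forall m, N0 <= m -> d0 <= dep (tau m).
  by move=> m hm; apply: hmin; exists m.
have hA : forall X (d : 'I_(nV V)), d < d0 -> forall k,
    sIndex (tau (N0 + k)) (X,d) = sIndex (tau N0) (X,d).
  move=> X d hd; elim=> [|k IH]; first by rewrite addn0.
  case: (stepE (N0+k)) => b [_ [h1 h2]]; case: (step_lemma (hinv _) h1 h2) => _ _ hi _.
  rewrite addnS hi ?IH //.
    by apply: leq_trans hd (hge _ _); rewrite leq_addr.
  by apply: leq_trans hd (hge _ _); rewrite -addnS leq_addr.
have hB : exists m1 b a X (d : 'I_(nV V)),
    [/\ N0 <= m1, pi (tau m1) = Some b, sval b = RDec a X d & d < d0].
  apply: NNPP => hnB.
  have hB' : forall m b a X (d : 'I_(nV V)), N0 <= m -> pi (tau m) = Some b ->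
      sval b = RDec a X d -> d0 <= d.
    move=> m b a X d hm hb hs; rewrite leqNgt; apply/negP => hlt; apply: hnB.
    by exists m, b, a, X, d.
  have cst : forall m, N0 <= m -> exists b, [/\ pi (tau m) = Some b,
      tpre Q (tau m) (sval b), teff Q (tau m) (sval b) (tau m.+1),
      sC (tau m) (inord d0) <= sC (tau m.+1) (inord d0) &
      forall X d, sval b = RPush O X d -> dep (tau m) = d0 ->
        sC (tau m) (inord d0) < sC (tau m.+1) (inord d0)].
    move=> m hm; case: (stepE m) => b [hb [h1 h2]]; exists b.
    have [c1 c2] := c_step (hinv m) h1 h2 (hge m hm) (fun a X d e => hB' m b a X d hm hb e).
    by split.
  have nopush : forall m b X d, N0 <= m -> pi (tau m) = Some b ->
      sval b = RPush O X d -> dep (tau m) = d0 -> False.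
    move=> m b X d hm hb hs hdm.
    have [b' [hb' _ _ _ hlt]] := cst m hm.
    have eb : b' = b by congruence.
    subst b'.
    have := hlt _ _ hs hdm.
    have [m' [hm' em']] := hrec m hm m.+1.
    have hmono : forall k, N0 <= k -> sC (tau k) (inord d0) <= sC (tau k.+1) (inord d0).
      by move=> k hk; case: (cst k hk) => b'' [].
    have := mono (f := fun k => nat_of_ord (sC (tau k) (inord d0))) hmono (m := m.+1) (m' := m') (leqW hm) hm'.
    rewrite /= em'; lia.
  have hm0k : forall k, N0 <= m0 + k by move=> k; apply: leq_trans hm0 (leq_addr _ _).
  have dconst : forall k, dep (tau (m0 + k)) = d0.
    elim=> [|k IH]; first by rewrite addn0.
    case: (stepE (m0+k)) => b [hb [h1 h2]]; have [_ hdep _ _] := step_lemma (hinv _) h1 h2.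
    rewrite addnS; move: hdep; case E: (sval b) => [X d|X d||a|a X d].
    - by move=> [e1 e2]; exfalso; apply: (nopush (m0+k) b X d (hm0k k) hb E).
    - move=> [e1 e2]; have := hge (m0+k).+1 (leqW (hm0k k)); rewrite e2.
      move: IH; rewrite e1; lia.
    - by move=> ->.
    - by move=> ->.
    - by move=> ->.
  have det : forall k b t', pi (tau (m0+k)) = Some b -> succ (tau (m0+k)) b t' ->
      t' = tau (m0+k).+1.
    move=> k b t' hb [h1 h2].
    case: (stepE (m0+k)) => b' [hb' [h1' h2']].
    have eb : b' = b by congruence.
    subst b'.
    move: h1 h2 h1' h2'; case E: (sval b) => [X d|X d||a|a X d] h1 h2 h1' h2'.
    - by exfalso; apply: (nopush _ b X d (hm0k k) hb E (dconst k)).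
    - exfalso; case: (step_lemma (hinv _) h1' h2') => _ [e1 e2] _ _.
      have := dconst k.+1; rewrite addnS e2.
      have := dconst k; rewrite e1; lia.
    - by exfalso; apply: (nomove _ b (hm0k k) hb E).
    - apply: ract_det h2 h2'.
      by have := svalP b; rewrite E.
    - exfalso; have := hB' _ b a X d (hm0k k) hb E.
      case: h1' => _ _ hix.
      case: (hinv (m0+k)) => _ _ I3 _ _.
      have := I3 _ _ hix; rewrite dconst; lia.
  have [sigma [m [h0 hf hg]]] := hsc tau m0 hinit (fun i _ => hstep i).
  have hsig : forall i, i <= m -> sigma i = tau (m0 + i).
    elim=> [|i IH] hi; first by rewrite addn0.
    case: (hf i hi) => _ [b [hb hs]].
    have hi' : i <= m by apply: ltnW.
    rewrite (IH hi') in hb hs.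
    by rewrite addnS; apply: det hb hs.
  case: (hstep (m0 + m)) => hng _; apply: hng.
  by rewrite -(hsig m (leqnn m)).
case: hB => m1 [b [a [X [d [hm1 hb hs hd]]]]].
exists X; split.
  exists (tau m1), b; split.
  - exact: hrec.
  - exact: hb.
  - rewrite /decX hs; have := svalP b; rewrite hs; move=> h; exact: h.
move=> t b' hio hpi; apply/negP => hinc.
case: (hio N0) => m [hm et]; subst t.
case: (stepE m) => b'' [hb'' [h1 _]].
have eb : b'' = b' by congruence.
subst b''.
have hix : sIndex (tau m) (X, d).
  have := hA X d hd (m - N0); rewrite subnKC // => ->.
  have := hA X d hd (m1 - N0); rewrite subnKC // => <-.
  case: (stepE m1) => c [hc [hc1 _]].
  have ec : c = b by congruence.
  subst c; move: hc1; rewrite hs; case=> _ _ h; exact: h.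
have hin : sIn (tau m) X by case: (hinv m) => _ I2 _ _ _; exact: I2 _ _ hix.
move: hinc h1; rewrite /incX; case: (sval b') => [Y e|Y e||a' |a' Y e] //=.
  move=> hI [_ hno]; have := hno X; rewrite hin.
  by case: (qN Q a' X) hI => [[]|] //= _ /(_ erefl).
move=> hI [_ hno _]; have := hno X; rewrite hin.
by case: (qN Q a' X) hI => [[]|] //= _ /(_ erefl).
Qed.
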